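(* If $[w,n] \in \mathbb{W}$ and $\alpha \vDash \ell(w)$ are such that $\mathrm{Des}(w) = I(\alpha)$ then $\Psi_{\leq}([w,n]) = L_\alpha$, $\Psi_{>}([w,n]) = L_{\alpha^{\tt c}}$, $\Psi_{\geq}([w^{\tt r},n]) = L_{\alpha^{\tt r}}$, and $\Psi_{<}([w^{\tt r},n]) = L_{\alpha^{\tt t}}$.
   Context: Let $\Bbbk$ be a field. For a word $w=w_1\cdots w_m$ of positive integers with $\max(w)\le n$, $[w,n]$ is the linear endomorphism of the $\Bbbk$-span of all words sending a word $v$ of length $n$ to $v_{w_1}\cdots v_{w_m}$ and others to $0$; $\mathbb{W}$ is the set of these and $\textbf{W}$ their span, a graded bialgebra (degree $\ell(w)$) with product $[v,m]\otimes[w,n]\mapsto[v\sqcup\!\sqcup(w\uparrow m),m+n]$ and deconcatenation coproduct $\Delta_\odot([w,n])=\sum_i[w_1\cdots w_i,n]\otimes[w_{i+1}\cdots w_m,n]$, counit $1$ on $[\emptyset,n]$ and $0$ otherwise. Let $\zeta_\le:\textbf{W}\to\Bbbk$ send $[w,n]$ to $1$ if $w$ is weakly increasing and $0$ otherwise; $\zeta_\ge,\zeta_<,\zeta_>$ are defined likewise with weakly decreasing, strictly increasing, strictly decreasing. For $\bullet\in\{\le,\ge,<,>\}$, $\Psi_\bullet:\textbf{W}\to\textsf{QSym}$ is $\Psi_\bullet(x)=\sum_\alpha(\zeta_\bullet)_\alpha(x)M_\alpha$, where $M_\alpha$ is the monomial quasi-symmetric function and, for $\alpha=(\alpha_1,\dots,\alpha_m)$,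 $(\zeta_\bullet)_\alpha$ is the iterated coproduct into $\textbf{W}^{\otimes m}$, followed by projection onto degrees $\alpha_1,\dots,\alpha_m$, $\zeta_\bullet^{\otimes m}$, and multiplication (with $(\zeta_\bullet)_\emptyset$ the counit); it is the unique combinatorial bialgebra morphism $(\textbf{W},\zeta_\bullet)\to(\textsf{QSym},\zeta_{\textsf{QSym}})$. For $\alpha=(\alpha_1,\dots,\alpha_l)\vDash n$, $I(\alpha)=\{\alpha_1,\alpha_1+\alpha_2,\dots,\alpha_1+\cdots+\alpha_{l-1}\}$; $L_\alpha=\sum_{I(\alpha)\subseteq I(\beta)}M_\beta$ is the fundamental quasi-symmetric function; $\alpha^{\tt r}=(\alpha_l,\dots,\alpha_1)$, $\alpha^{\tt c}$ is the composition with $I(\alpha^{\tt c})=\{1,\dots,n-1\}\setminus I(\alpha)$, $\alpha^{\tt t}=(\alpha^{\tt r})^{\tt c}$. For a word $w$, $w^{\tt r}$ is its reversal and $\mathrm{Des}(w)=\{i:w_i>w_{i+1}\}$. *)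

(* Defs.v *)
From HB Require Import structures.
From mathcomp Require Import all_boot all_order all_algebra.
Set Implicit Arguments. Unset Strict Implicit. Unset Printing Implicit Defensive.
Import GRing.Theory.
Local Open Scope ring_scope.

Definition is_comp (alpha : seq nat) : bool := all (fun a => (0 < a)%N) alpha.

Definition Ilist (alpha : seq nat) : seq nat :=
  [seq sumn (take j alpha) | j <- iota 1 (size alpha).-1].

(* Des(w) = {i : w_i > w_{i+1}}, positions 1-indexed, 1 <= i <= l(w)-1 *)
Definition Des (w : seq nat) (i : nat) : bool :=
  [&& (0 < i)%N, (i < size w)%N & (nth 0%N w i < nth 0%N w i.-1)%N].

(* the composition of n whose set I(.) is S \cap {1,...,n-1} *)
Definition comp_of_set (n : nat) (S : pred nat) : seq nat :=
  if n == 0%N then [::]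
  else pairmap (fun a b => b - a)%N 0%N (rcons [seq i <- iota 1 n.-1 | S i] n).

Definition compl (alpha : seq nat) : seq nat :=
  comp_of_set (sumn alpha) (fun i => i \notin Ilist alpha).
Definition transp (alpha : seq nat) : seq nat := compl (rev alpha).

Inductive zeta_kind := Zle | Zge | Zlt | Zgt.

Definition zeta_rel (z : zeta_kind) : rel nat :=
  match z with
  | Zle => fun a b => (a <= b)%N
  | Zge => fun a b => (b <= a)%N
  | Zlt => fun a b => (a < b)%N
  | Zgt => fun a b => (b < a)%N
  end.

Definition zeta (k : fieldType) (z : zeta_kind) (u : seq nat) : k :=
  (sorted (zeta_rel z) u)%:R.

(* An element of QSym over k is represented by its coordinate function in the
   monomial basis: F = sum_beta F(beta) M_beta (F(beta) = 0 off compositions). *)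
Definition QSym (k : fieldType) := seq nat -> k.

Definition M (k : fieldType) (alpha : seq nat) : QSym k :=
  fun beta => ((beta == alpha) && is_comp alpha)%:R.

Definition L (k : fieldType) (alpha : seq nat) : QSym k :=
  fun beta => [&& is_comp beta, sumn beta == sumn alpha &
                  all (fun i => i \in Ilist beta) (Ilist alpha)]%:R.

(* (zeta)_beta([w,n]): iterated deconcatenation coproduct into m = l(beta)
   tensor factors, projection onto degrees beta_1,...,beta_m, then
   zeta^{\otimes m} and multiplication.  The only surviving term is the
   splitting of w into consecutive factors of lengths beta_1,...,beta_m. *)
Definition zeta_comp (k : fieldType) (z : zeta_kind) (beta : seq nat)
    (w : seq nat) (n : nat) : k :=
  if sumn beta == size w then \prod_(u <- reshape beta w) zeta k z u else 0.

Definition Psi (k : fieldType) (z : zeta_kind) (w : seq nat) (n : nat) : QSym k :=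
  fun beta => if is_comp beta then zeta_comp k z beta w n else 0.

(* Main.v *)
Require Import Defs.
From mathcomp Require Import all_boot all_order all_algebra.
From mathcomp Require Import zify.
From Stdlib Require Import FunctionalExtensionality.
Set Implicit Arguments. Unset Strict Implicit. Unset Printing Implicit Defensive.
Import GRing.Theory.
Local Open Scope ring_scope.

Lemma prod_zeta (k : fieldType) z s :
  \prod_(u <- s) zeta k z u = (all (sorted (zeta_rel z)) s)%:R :> k.
Proof.
elim: s => [|u s IH]; first by rewrite big_nil.
by rewrite big_cons IH /zeta /= -natrM mulnb.
Qed.

Lemma Psi_char (k : fieldType) z v n beta : Psi k z v n beta =
  [&& is_comp beta, sumn beta == size v & all (sorted (zeta_rel z)) (reshape beta v)]%:R.
Proof.
rewrite /Psi /zeta_comp; case: (is_comp beta) => //=.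
by case: (sumn beta == size v) => //=; rewrite prod_zeta.
Qed.

Local Close Scope ring_scope.
Lemma Ilist_cons b bs : Ilist (b :: bs) =
  if bs is [::] then [::] else b :: map (addn b) (Ilist bs).
Proof.
rewrite /Ilist /=; case: bs => [|c bs] //=.
rewrite addn0; congr (_ :: _).
rewrite (iotaDl 1 1) -!map_comp; apply: eq_map => j /=.
by rewrite add0n.
Qed.

Lemma mem_Ilist_cons b bs x : (x \in Ilist (b :: bs)) =
  (bs != [::]) && ((x == b) || ((b <= x) && (x - b \in Ilist bs))).
Proof.
rewrite Ilist_cons; case: bs => [|c bs] //=.
rewrite in_cons; congr (_ || _).
apply/mapP/andP => [[y hy ->]|[h1 h2]].
  by rewrite leq_addr addKn.
by exists (x - b) => //; rewrite subnKC.
Qed.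

Lemma blocks (r : rel nat) beta v : is_comp beta -> sumn beta = size v ->
  all (sorted r) (reshape beta v) <->
  (forall i, 0 < i < size v -> i \notin Ilist beta -> r (nth 0 v i.-1) (nth 0 v i)).
Proof.
elim: beta v => [|b bs IH] v /=.
  move=> _ /esym/size0nil ->; by split=> // _ i; rewrite andbF.
move=> /andP[b0 cbs] hv.
have hsd : sumn bs = size (drop b v) by rewrite size_drop -hv addKn.
have hbv : b <= size v by rewrite -hv leq_addr.
have hst : size (take b v) = b by rewrite size_take_min; apply/minn_idPl.
move: (IH _ cbs hsd) => {}IH.
split.
- move=> /andP[s1 /IH s2] i /andP[i0 iv] ni.
  case: (ltngtP i b) => hib.
  + move/sortedP: s1 => /(_ 0 i.-1); rewrite hst prednK // => /(_ hib).
    by rewrite !nth_take // (leq_ltn_trans (leq_pred i) hib).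
  + have := s2 (i - b); rewrite !nth_drop size_drop.
    have -> : b + (i - b) = i by lia.
    have -> : b + (i - b).-1 = i.-1 by lia.
    apply; first by lia.
    apply/negP => hj; case/negP: ni.
    rewrite mem_Ilist_cons hj ltnW // andbT orbT andbT.
    by case: bs {IH s2 cbs hsd hv} hj.
  + subst i; case/negP: ni.
    rewrite mem_Ilist_cons eqxx andbT.
    by case: bs {IH s1 s2 cbs hsd} hv iv => //= hv; lia.
- move=> H; apply/andP; split.
  + apply/sortedP => j; rewrite hst => hj.
    rewrite !nth_take ?(ltnW hj) //.
    have := H j.+1; rewrite /=; apply; first by lia.
    rewrite mem_Ilist_cons; apply/negP => /andP[_ /orP[/eqP|/andP[h _]]]; lia.
  + apply/IH => j /andP[j0 jv] nj.
    have := H (b + j); rewrite !nth_drop.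
    have -> : (b + j).-1 = b + j.-1 by lia.
    apply; first by rewrite size_drop in jv; lia.
    rewrite mem_Ilist_cons; apply/negP => /andP[_ /orP[/eqP|/andP[_ h]]]; first lia.
    by rewrite addKn (negbTE nj) in h.
Qed.
Lemma tele x0 t j : sorted leq (x0 :: t) -> j <= size t ->
  sumn (take j (pairmap (fun a b => b - a) x0 t)) = nth x0 (x0 :: t) j - x0.
Proof.
elim: t x0 j => [|y t IH] x0 j /=.
  by move=> _; case: j => [|[|j]] /=; rewrite ?subnn.
case/andP=> hxy hp; case: j => [|j] /= hj; first by rewrite subnn.
rewrite IH //.
have : y <= nth y (y :: t) j.
  case: j hj => [|j] hj //=.
  have /allP := order_path_min leq_trans hp; apply; exact: mem_nth.
rewrite (set_nth_default y x0) //=; lia.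
Qed.

Lemma comp_of_set_prop N S : sumn (comp_of_set N S) = N /\
  (forall i, (i \in Ilist (comp_of_set N S)) = (0 < i < N) && S i).
Proof.
rewrite /comp_of_set; case: eqP => [->|/eqP N0]; first by split=> // i; rewrite andbF.
set s := [seq i <- iota 1 N.-1 | S i].
have hs : sorted leq (0 :: rcons s N).
  rewrite /= rcons_path path_min_sorted; last by apply/allP.
  rewrite sorted_filter ?iota_sorted //=; last exact: leq_trans.
  have := mem_last 0 s; rewrite inE => /orP[/eqP->//|].
  rewrite mem_filter mem_iota => /andP[_ /andP[_ h]]; idtac.
move: (last 0 s) h N0 => x h N0; lia.
set c := pairmap _ _ _.
have hc : size c = (size s).+1 by rewrite size_pairmap size_rcons.
have hI : Ilist c = s.
  rewrite /Ilist hc /= (iotaDl 1 0) -map_comp.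
  rewrite -[RHS](mkseq_nth 0); rewrite /mkseq; apply/eq_in_map => j.
  rewrite mem_iota /= => hj.
  rewrite tele //=; last by rewrite size_rcons; lia.
  by rewrite subn0 add0n nth_rcons -(add0n (size s)) hj.
split.
  rewrite -[c in LHS](take_size) tele //; last by rewrite hc size_rcons.
  by rewrite hc /= nth_rcons ltnn eqxx subn0.
move=> i; rewrite hI mem_filter mem_iota andbC; congr (_ && _).
lia.
Qed.

Lemma sumn_take_rev a j : j <= size a ->
  sumn (take j (rev a)) + sumn (take (size a - j) a) = sumn a.
Proof.
move=> hj; rewrite take_rev sumn_rev addnC -sumn_cat cat_take_drop //.
Qed.

Lemma sumn_take_le a j : sumn (take j a) <= sumn a.
Proof. by rewrite -{2}(cat_take_drop j a) sumn_cat leq_addr. Qed.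

Lemma Ilist_rev a i : (i \in Ilist (rev a)) =
  (i <= sumn a) && (sumn a - i \in Ilist a).
Proof.
rewrite /Ilist size_rev; apply/mapP/andP => [[j hj ->]|[hi /mapP[j hj he]]].
  move: hj; rewrite mem_iota => hj.
  have hs' : j <= size a by lia.
  have := sumn_take_rev hs'.
  split; first by rewrite -(sumn_take_rev hs') leq_addr.
  apply/mapP; exists (size a - j); first by rewrite mem_iota; lia.
  lia.
exists (size a - j); first by move: hj; rewrite !mem_iota; lia.
have hj' : size a - j <= size a by apply: leq_subr.
have := sumn_take_rev hj'.
have -> : size a - (size a - j) = j by move: hj; rewrite mem_iota; lia.
lia.
Qed.

Lemma DesE w i : 0 < i < size w -> Des w i = (nth 0 w i < nth 0 w i.-1).
Proof. by rewrite /Des => /andP[-> ->]. Qed.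

Lemma nth_rev1 w x : 0 < x < size w -> nth 0 (rev w) x.-1 = nth 0 w (size w - x).
Proof. move=> h; rewrite nth_rev; [congr nth|]; lia. Qed.

Lemma nth_rev2 w x : 0 < x < size w -> nth 0 (rev w) x = nth 0 w (size w - x).-1.
Proof. move=> h; rewrite nth_rev; [congr nth|]; lia. Qed.

Theorem proposition5p5 (k : fieldType) (w : seq nat) (n : nat) (alpha : seq nat) :
  all (fun x => (0 < x <= n)%N) w ->
  is_comp alpha -> sumn alpha = size w ->
  (forall i : nat, Des w i = (i \in Ilist alpha)) ->
  [/\ Psi k Zle w n = L k alpha,
      Psi k Zgt w n = L k (compl alpha),
      Psi k Zge (rev w) n = L k (rev alpha) &
      Psi k Zlt (rev w) n = L k (transp alpha)].
Proof.
move=> _ ca hs hD.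
have hA : forall i, i \in Ilist alpha -> 0 < i < size w.
  by move=> i; rewrite -hD /Des => /and3P[-> ->].
have memc : forall i, (i \in Ilist (compl alpha)) = (0 < i < size w) && (i \notin Ilist alpha).
  by move=> i; rewrite /compl (proj2 (comp_of_set_prop _ _)) hs.
have memt : forall i, (i \in Ilist (transp alpha)) =
    (0 < i < size w) && ~~ ((i <= size w) && (size w - i \in Ilist alpha)).
  by move=> i; rewrite /transp /compl (proj2 (comp_of_set_prop _ _)) sumn_rev hs Ilist_rev hs.
have sc : sumn (compl alpha) = size w by rewrite /compl (proj1 (comp_of_set_prop _ _)).
have st : sumn (transp alpha) = size w
  by rewrite /transp /compl (proj1 (comp_of_set_prop _ _)) sumn_rev.
split; apply: functional_extensionality => beta; rewrite Psi_char /L;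
  (case cb: (is_comp beta) => //=); rewrite ?size_rev ?sc ?st ?sumn_rev ?hs;
  (case: eqP => hb //=); congr ((nat_of_bool _)%:R)%R;
  (apply/idP/idP => [/(blocks _ cb) H|H]; [have {}H := H ltac:(by rewrite ?size_rev)|apply/(blocks _ cb); first by rewrite ?size_rev]);
  rewrite ?size_rev //; try (apply/allP => i hi; apply/negPn/negP => nb).
- have [i0 iw] := andP (hA i hi).
  have := H i (introT andP (conj i0 iw)) nb; move: (hD i); rewrite hi DesE //=; lia.
- move=> i hi nb /=; rewrite leqNgt; apply/negP => hlt.
  have : i \in Ilist alpha by rewrite -hD DesE // hlt.
  by move/(allP H); rewrite (negbTE nb).
- move: hi; rewrite memc => /andP[hi na].
  have := H i hi nb => /= hlt.
  by move: na; rewrite -hD DesE // hlt.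
- move=> i hi nb /=.
  have : i \in Ilist alpha.
    apply/negPn/negP => na; move/negP: nb; apply; apply: (allP H).
    by rewrite memc hi.
  by rewrite -hD DesE.
- move: hi; rewrite Ilist_rev hs => /andP[iN hi].
  have [i0 iw] := andP (hA _ hi).
  have hi' : 0 < i < size w by lia.
  have := H i ltac:(by rewrite size_rev) nb; rewrite /= nth_rev1 // nth_rev2 //.
  move: (hD (size w - i)); rewrite hi DesE //=; lia.
- move=> i hi nb /=; rewrite nth_rev1 // nth_rev2 // leqNgt; apply/negP => hlt.
  have : i \in Ilist (rev alpha).
    rewrite Ilist_rev hs -hD DesE ?hlt ?andbT //; lia.
  by move/(allP H); rewrite (negbTE nb).
- move: hi; rewrite memt => /andP[hi na].
  have := H i ltac:(by rewrite size_rev) nb; rewrite /= nth_rev1 // nth_rev2 // => hlt.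
  move: na; rewrite -hD DesE ?hlt ?andbT; last lia.
  by move/andP: hi => [_ /ltnW ->].
- move=> i hi nb /=; rewrite nth_rev1 // nth_rev2 //.
  have : size w - i \in Ilist alpha.
    apply/negPn/negP => na; move/negP: nb; apply; apply: (allP H).
    by rewrite memt hi /= (negbTE na) andbF.
  by rewrite -hD DesE //; lia.
Qed.
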